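(* Let $(E,f)$ be a polymatroid that admits a tensor product with the uniform matroid $U_{2,3}$. Then $(E,f)$ is $1$-CI; that is, for every pair $(X,Y)$ of subsets of $E$ there exist a finite set $Z$ with $Z\cap E=\emptyset$ and a polymatroid $(E\cup Z, h)$ with $h(S)=f(S)$ for all $S\subseteq E$, such that $h(Z)=f(X)+f(Y)-f(X\cup Y)$, $h(X\cup Z)=h(X)$ and $h(Y\cup Z)=h(Y)$.
   Context: A polymatroid $(E,f)$ consists of a finite ground set $E$ and a function $f\colon 2^E\to\mathbb{R}$ with $f(\emptyset)=0$ that is monotone ($S\subseteq T\Rightarrow f(S)\le f(T)$) and submodular ($f(S)+f(T)\ge f(S\cup T)+f(S\cap T)$). The uniform matroid $U_{2,3}$ is the polymatroid on $\{1,2,3\}$ with rank function $r(T)=\min\{|T|,2\}$. A tensor product of polymatroids $(E_1,f_1)$ and $(E_2,f_2)$ is a polymatroid $(E_1\times E_2,g)$ such that $g(S\times T)=f_1(S)f_2(T)$ for all $S\subseteq E_1$, $T\subseteq E_2$. An extension $(E\cup Z,h)$ of $(E,f)$ (with $Z\cap E=\emptyset$) in which $h(Z)=f(X)+f(Y)-f(X\cup Y)$ and $h(X\cup Z)=h(X)$, $h(Y\cup Z)=h(Y)$ is called a common information extension for the pair $(X,Y)$. A polymatroid is called $1$-CI if it admits a common information extension for every pair of subsets of its ground set. *)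

(* Defs.v *)
From mathcomp Require Import all_boot all_order all_algebra.
From mathcomp Require Import reals.
Set Implicit Arguments. Unset Strict Implicit. Unset Printing Implicit Defensive.
Import Order.TTheory GRing.Theory Num.Theory.
Local Open Scope ring_scope.

Definition polymatroid (R : realType) (T : finType) (f : {set T} -> R) : Prop :=
  [/\ f set0 = 0,
      (forall S U : {set T}, S \subset U -> f S <= f U) &
      (forall S U : {set T}, f (S :|: U) + f (S :&: U) <= f S + f U)].

Definition rank_U23 (R : realType) (T : {set 'I_3}) : R := (minn #|T| 2)%:R.

Definition has_tensor_U23 (R : realType) (E : finType) (f : {set E} -> R) : Prop :=
  exists g : {set (E * 'I_3)%type} -> R,
    polymatroid g /\
    forall (S : {set E}) (T : {set 'I_3}), g (setX S T) = f S * rank_U23 R T.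

Definition CI_extension (R : realType) (E : finType) (f : {set E} -> R)
    (X Y : {set E}) : Prop :=
  exists (Z : finType) (h : {set (E + Z)%type} -> R),
    let emb (S : {set E}) : {set (E + Z)%type} := [set inl x | x in S] in
    let Zs : {set (E + Z)%type} := [set inr z | z : Z] in
    [/\ polymatroid h,
        (forall S : {set E}, h (emb S) = f S),
        h Zs = f X + f Y - f (X :|: Y),
        h (emb X :|: Zs) = h (emb X) &
        h (emb Y :|: Zs) = h (emb Y)].

Definition one_CI (R : realType) (E : finType) (f : {set E} -> R) : Prop :=
  forall X Y : {set E}, CI_extension f X Y.

(* Main.v *)
Require Import Defs.
From mathcomp Require Import all_boot all_order all_algebra.
From mathcomp Require Import reals.
From mathcomp Require Import lra.
Import Order.TTheory GRing.Theory Num.Theory.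
Local Open Scope ring_scope.

Definition i0 : 'I_3 := @Ordinal 3 0 isT.
Definition i1 : 'I_3 := @Ordinal 3 1 isT.
Definition i2 : 'I_3 := @Ordinal 3 2 isT.

Ltac ss := apply/setP; case=> ? [[|[|[|?]]] ?]; rewrite !inE //=;
  rewrite -?val_eqE /= ?andbT ?andbF ?orbF ?orbT //;
  repeat match goal with |- context [?y \in ?A] => case: (y \in A) end; by [].


Lemma gfacts (R : realType) (E : finType) (f : {set E} -> R)
  (g : {set (E * 'I_3)%type} -> R)
  (hg : forall (S : {set E}) (T : {set 'I_3}), g (setX S T) = f S * rank_U23 R T) :
  [/\ forall S i, g (setX S [set i]) = f S,
      forall S i j, i != j -> g (setX S [set i; j]) = f S * 2%:R &
      forall S, g (setX S setT) = f S * 2%:R].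
Proof.
split.
- by move=> S i; rewrite hg /rank_U23 cards1 (_ : minn 1 2 = 1)%N // mulr1.
- by move=> S i j ij; rewrite hg /rank_U23 cards2 ij.
- by move=> S; rewrite hg /rank_U23 cardsT card_ord.
Qed.

Lemma two (R : realType) (E : finType) (f : {set E} -> R)
  (g : {set (E * 'I_3)%type} -> R) (pg : polymatroid g)
  (hg : forall (S : {set E}) (T : {set 'I_3}), g (setX S T) = f S * rank_U23 R T)
  (A B : {set E}) (i j : 'I_3) : i != j ->
  g (setX A [set i] :|: setX B [set j]) = f A + f B.
Proof.
move=> ij; case: pg => g0 mon sub; case: (@gfacts _ _ _ _ hg) => F1 F2 F3.
have K : forall k : 'I_3, ~~ ((k == i) && (k == j)).
  move=> k; apply/negP => /andP[/eqP -> ]; by rewrite (negbTE ij).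
have e1 : setX A [set i] :&: setX B [set j] = set0.
  apply/setP => -[x k]; rewrite !inE /=; move: (K k).
  repeat match goal with |- context [?y \in ?A] => case: (y \in A) end;
  by case: (k == i); case: (k == j).
have e2 : (setX A [set i] :|: setX B [set j]) :|: setX (A :|: B) [set j]
   = setX A [set i] :|: setX (A :|: B) [set j].
  apply/setP => -[x k]; rewrite !inE /=; move: (K k).
  repeat match goal with |- context [?y \in ?A] => case: (y \in A) end;
  by case: (k == i); case: (k == j).
have e3 : (setX A [set i] :|: setX B [set j]) :&: setX (A :|: B) [set j]
   = setX B [set j].
  apply/setP => -[x k]; rewrite !inE /=; move: (K k).
  repeat match goal with |- context [?y \in ?A] => case: (y \in A) end;
  by case: (k == i); case: (k == j).
have e4 : (setX A [set i] :|: setX (A :|: B) [set j]) :|: setX (A :|: B) [set i]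
   = setX (A :|: B) [set i; j].
  apply/setP => -[x k]; rewrite !inE /=; move: (K k).
  repeat match goal with |- context [?y \in ?A] => case: (y \in A) end;
  by case: (k == i); case: (k == j).
have e5 : (setX A [set i] :|: setX (A :|: B) [set j]) :&: setX (A :|: B) [set i]
   = setX A [set i].
  apply/setP => -[x k]; rewrite !inE /=; move: (K k).
  repeat match goal with |- context [?y \in ?A] => case: (y \in A) end;
  by case: (k == i); case: (k == j).
have s1 := sub (setX A [set i]) (setX B [set j]).
have s2 := sub (setX A [set i] :|: setX B [set j]) (setX (A :|: B) [set j]).
have s3 := sub (setX A [set i] :|: setX (A :|: B) [set j]) (setX (A :|: B) [set i]).
rewrite e1 g0 !F1 in s1.
rewrite e2 e3 !F1 in s2.
rewrite e4 e5 F2 // !F1 in s3.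
apply/eqP; rewrite eq_le; apply/andP; split; lra.
Qed.

Lemma mono' (T : finType) (R : realType) (g : {set T} -> R) (pg : polymatroid g)
  (A B : {set T}) : A :|: B = B -> g A <= g B.
Proof. by case: pg => _ mon _ <-; apply: mon; apply: subsetUl. Qed.

Theorem theorem5p1 (R : realType) (E : finType) (f : {set E} -> R) :
  polymatroid f -> has_tensor_U23 f -> one_CI f.
Proof.
move=> pf [g [pg hg]] X Y.
have pg' := pg.
case: pg' => g0 mon sub; case: (@gfacts _ _ _ _ hg) => F1 F2 F3.
case: (pf) => f0 fmon fsub.
have tw := @two _ _ _ _ pg hg.
pose C := setX X [set i1] :|: setX Y [set i2].
pose G S := g (setX S [set i0] :|: C).
have GC : g C = f X + f Y by rewrite /C tw.
have GX : G X = f X + f (X :|: Y).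
  have s1 := sub (setX X setT) (setX (X :|: Y) [set i2]).
  have e1 : setX X setT :&: setX (X :|: Y) [set i2] = setX X [set i2] by ss.
  rewrite e1 F3 !F1 in s1.
  have m1 : G X <= g (setX X setT :|: setX (X :|: Y) [set i2]).
    by rewrite ?/G; apply: mon; apply/setUidPr; rewrite /C; ss.
  have s2 := sub (setX X [set i0] :|: C) (setX X setT).
  have e2 : (setX X [set i0] :|: C) :|: setX X setT = setX X setT :|: setX Y [set i2].
    by rewrite /C; ss.
  have e3 : (setX X [set i0] :|: C) :&: setX X setT =
     setX X [set i0; i1] :|: setX (X :&: Y) [set i2] by rewrite /C; ss.
  rewrite e2 e3 F3 in s2.
  have m2 : g (setX X [set i0; i1]) <= g (setX X [set i0; i1] :|: setX (X :&: Y) [set i2]).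
    by rewrite ?/G; apply: mon; apply/setUidPr; ss.
  have m3 : g (setX X [set i1] :|: setX (X :|: Y) [set i2]) <= g (setX X setT :|: setX Y [set i2]).
    by rewrite ?/G; apply: mon; apply/setUidPr; ss.
  rewrite F2 // in m2; rewrite tw // in m3.
  move: m1; rewrite /G => m1; apply/eqP; rewrite eq_le; apply/andP; split; lra.
have GY : G Y = f Y + f (X :|: Y).
  have s1 := sub (setX Y setT) (setX (X :|: Y) [set i1]).
  have e1 : setX Y setT :&: setX (X :|: Y) [set i1] = setX Y [set i1] by ss.
  rewrite e1 F3 !F1 in s1.
  have m1 : G Y <= g (setX Y setT :|: setX (X :|: Y) [set i1]).
    by rewrite ?/G; apply: mon; apply/setUidPr; rewrite /C; ss.
  have s2 := sub (setX Y [set i0] :|: C) (setX Y setT).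
  have e2 : (setX Y [set i0] :|: C) :|: setX Y setT = setX Y setT :|: setX X [set i1].
    by rewrite /C; ss.
  have e3 : (setX Y [set i0] :|: C) :&: setX Y setT =
     setX Y [set i0; i2] :|: setX (X :&: Y) [set i1] by rewrite /C; ss.
  rewrite e2 e3 F3 in s2.
  have m2 : g (setX Y [set i0; i2]) <= g (setX Y [set i0; i2] :|: setX (X :&: Y) [set i1]).
    by rewrite ?/G; apply: mon; apply/setUidPr; ss.
  have m3 : g (setX (X :|: Y) [set i1] :|: setX Y [set i2]) <= g (setX Y setT :|: setX X [set i1]).
    by rewrite ?/G; apply: mon; apply/setUidPr; ss.
  rewrite F2 // in m2; rewrite tw // in m3.
  move: m1; rewrite /G => m1; apply/eqP; rewrite eq_le; apply/andP; split; lra.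
have GE : f setT + f (X :|: Y) <= G setT.
  have s1 := sub (setX setT [set i0] :|: C) (setX setT [set i0] :|: setX Y [set i1; i2]).
  have e1 : (setX setT [set i0] :|: C) :|: (setX setT [set i0] :|: setX Y [set i1; i2])
    = setX setT [set i0] :|: setX (X :|: Y) [set i1] :|: setX Y [set i2] by rewrite /C; ss.
  have e2 : (setX setT [set i0] :|: C) :&: (setX setT [set i0] :|: setX Y [set i1; i2])
    = setX setT [set i0] :|: setX (X :&: Y) [set i1] :|: setX Y [set i2] by rewrite /C; ss.
  rewrite e1 e2 in s1.
  have m1 : g (setX setT [set i0] :|: setX (X :|: Y) [set i1]) <=
     g (setX setT [set i0] :|: setX (X :|: Y) [set i1] :|: setX Y [set i2]).
    by rewrite ?/G; apply: mon; apply/setUidPr; ss.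
  have m2 : g (setX setT [set i0] :|: setX Y [set i2]) <=
     g (setX setT [set i0] :|: setX (X :&: Y) [set i1] :|: setX Y [set i2]).
    by rewrite ?/G; apply: mon; apply/setUidPr; ss.
  have s3 := sub (setX setT [set i0]) (setX Y setT).
  have e3 : setX setT [set i0] :|: setX Y setT = setX setT [set i0] :|: setX Y [set i1; i2] by ss.
  have e4 : setX setT [set i0] :&: setX Y setT = setX Y [set i0] by ss.
  rewrite e3 e4 !F1 F3 in s3.
  rewrite !tw // in m1 m2.
  rewrite /G; lra.
have GS : forall S, G setT + f S <= G S + f setT.
  move=> S; have s1 := sub (setX S [set i0] :|: C) (setX setT [set i0]).
  have e1 : (setX S [set i0] :|: C) :|: setX setT [set i0] = setX setT [set i0] :|: C.
    by rewrite /C; ss.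
  have e2 : (setX S [set i0] :|: C) :&: setX setT [set i0] = setX S [set i0].
    by rewrite /C; ss.
  rewrite e1 e2 !F1 in s1; rewrite /G; lra.
have Glow : forall S, f S + f (X :|: Y) <= G S.
  move=> S; have := GS S; lra.
have Gsub : forall S T, G (S :|: T) + G (S :&: T) <= G S + G T.
  move=> S T; have s1 := sub (setX S [set i0] :|: C) (setX T [set i0] :|: C).
  have e1 : (setX S [set i0] :|: C) :|: (setX T [set i0] :|: C) = setX (S :|: T) [set i0] :|: C.
    by rewrite /C; ss.
  have e2 : (setX S [set i0] :|: C) :&: (setX T [set i0] :|: C) = setX (S :&: T) [set i0] :|: C.
    by rewrite /C; ss.
  by rewrite e1 e2 in s1.
have Gmix : forall S T, G (S :|: T) + f (S :&: T) <= f S + G T.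
  move=> S T; have s1 := sub (setX S [set i0]) (setX T [set i0] :|: C).
  have e1 : setX S [set i0] :|: (setX T [set i0] :|: C) = setX (S :|: T) [set i0] :|: C.
    by rewrite /C; ss.
  have e2 : setX S [set i0] :&: (setX T [set i0] :|: C) = setX (S :&: T) [set i0].
    by rewrite /C; ss.
  by rewrite e1 e2 !F1 in s1.
have Gmon : forall S T : {set E}, S \subset T -> G S <= G T.
  move=> S T ST; apply: mon; apply: setSU; exact: setXS.
pose pre (A : {set (E + unit)%type}) : {set E} := [set x | inl x \in A].
pose h (A : {set (E + unit)%type}) : R :=
  if inr tt \in A then G (pre A) - f (X :|: Y) else f (pre A).
exists unit, h => emb Zs.
have preU : forall A B, pre (A :|: B) = pre A :|: pre B.
  by move=> A B; apply/setP => x; rewrite !inE.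
have preI : forall A B, pre (A :&: B) = pre A :&: pre B.
  by move=> A B; apply/setP => x; rewrite !inE.
have preE : forall S, pre (emb S) = S.
  move=> S; apply/setP => x; rewrite !inE /emb mem_imset //.
  by move=> a b [].
have inE' : forall S, (inr tt \in emb S) = false.
  by move=> S; apply/negbTE/imsetP => -[y _].
have preZ : pre Zs = set0.
  by apply/setP => x; rewrite !inE; apply/negbTE/imsetP => -[y _].
have inZ : inr tt \in Zs by apply/imsetP; exists tt.
split.
- split.
  + rewrite /h inE (_ : pre set0 = set0) //.
    by apply/setP => x; rewrite !inE.
  + move=> A B AB.
    have pAB : pre A \subset pre B.
      by apply/subsetP => x; rewrite !inE; apply: (subsetP AB).
    rewrite /h; case: ifP => HA; case: ifP => HB.
    * by apply: lerB => //; apply: Gmon.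
    * by move: (subsetP AB _ HA); rewrite HB.
    * have := fmon _ _ pAB; have := Glow (pre B); lra.
    * exact: fmon.
  + move=> A B; rewrite /h preU preI !inE.
    case: (inr tt \in A); case: (inr tt \in B) => /=.
    * have := Gsub (pre A) (pre B); lra.
    * have := Gmix (pre B) (pre A); rewrite setUC setIC; lra.
    * have := Gmix (pre A) (pre B); lra.
    * exact: fsub.
- by move=> S; rewrite /h inE' preE.
- rewrite /h inZ preZ.
  have -> : G set0 = g C by rewrite /G /C; congr g; ss.
  by rewrite GC.
- by rewrite /h inE inZ orbT preU preE preZ setU0 inE' GX; lra.
- by rewrite /h inE inZ orbT preU preE preZ setU0 inE' GY; lra.
Qed.
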